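(* Let $D$ be a digraph with vertex set $\{v_1,\ldots,v_n\}$. For $i=1,\ldots,n$ let $d_i^+=|N^+(v_i)|$ and $d_i^-=|N^-(v_i)|$ be the out-degree and in-degree of $v_i$, and let $d_i=|N^+(v_i)\cup N^-(v_i)|$ be the degree of $v_i$ (the number of vertices adjacent to $v_i$). Then $$\alpha(D)\geq \sum_{i=1}^n \left( \frac{1}{1+d_i^+} + \frac{1}{1+d_i^-} - \frac{1}{1+d_i}\right).$$
   Context: All digraphs are finite, loopless and strict (for distinct vertices $u,v$ there is at most one edge from $u$ to $v$; edges in both directions are allowed). $N^+(v)$ and $N^-(v)$ denote the sets of out-neighbours and in-neighbours of $v$. A subset $S\subseteq V(D)$ is acyclic if the induced subdigraph $D[S]$ contains no directed cycle. The independence number $\alpha(D)$ is the maximum size of an acyclic subset of $V(D)$. *)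

(* Defs.v *)
From mathcomp Require Import all_boot all_order all_algebra.
Set Implicit Arguments. Unset Strict Implicit. Unset Printing Implicit Defensive.

(* A digraph on a finite vertex type V is given by its edge relation
   e : rel V (e u v means there is an edge u -> v). A relation automatically
   gives a strict digraph (at most one edge u -> v); looplessness is the
   hypothesis irreflexive e. *)

Definition outN (V : finType) (e : rel V) (v : V) : {set V} := [set w | e v w].
Definition inN (V : finType) (e : rel V) (v : V) : {set V} := [set u | e u v].

(* Since the vertices are distinct, such a cycle has length at most #|V|, so
   we quantify over tuples of length n <= #|V| to obtain a boolean predicate. *)
Definition has_dicycle_in (V : finType) (e : rel V) (S : {set V}) : bool :=
  [exists n : 'I_#|V|.+1, exists c : n.-tuple V,
     [&& (0 < n)%N, uniq c, all (fun x => x \in S) c & cycle e c]].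

Definition acyclic_set (V : finType) (e : rel V) (S : {set V}) : bool :=
  ~~ has_dicycle_in e S.

Definition alpha (V : finType) (e : rel V) : nat :=
  \max_(S : {set V} | acyclic_set e S) #|S|.

(* Main.v *)
Require Import Defs.
From mathcomp Require Import all_boot all_order all_algebra.
From mathcomp Require Import zify ring.
Import GRing.Theory Num.Theory.
Import Order.TTheory.
Local Open Scope ring_scope.
Set Implicit Arguments. Unset Strict Implicit. Unset Printing Implicit Defensive.

Definition gg (k : nat) : rat := (1 + k%:R)^-1.

Lemma gg_S k : gg k = (k.+1%:R)^-1.
Proof. by rewrite /gg mulrS. Qed.

Lemma g_ident (d m : nat) :
  gg d.-1 *+ d + gg d *+ m + (d == 0%N)%:R = (d + m).+1%:R * gg d.
Proof.
rewrite !gg_S; case: d => [|k] /=.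
  by rewrite mulr0n add0r add0n mulr1n invr1 mulr1 mulrSr.
rewrite addr0.
have h1 : (k.+1%:R : rat) != 0 by rewrite pnatr_eq0.
have h2 : (k.+2%:R : rat) != 0 by rewrite pnatr_eq0.
rewrite -[_ *+ k.+1]mulr_natl mulfV // -[_ *+ m]mulr_natl.
apply: (mulIf h2); rewrite mulrDl mulfVK // -mulrA mulVf // mulr1.
by rewrite mul1r -natrD; congr (_%:R); lia.
Qed.

Definition GA (V : finType) (A : V -> {set V}) (U : {set V}) : rat :=
  \sum_(v in U) gg #|A v :&: U|.

Lemma sum_setD1 (V : finType) (U : {set V}) x (F : V -> rat) :
  \sum_(v in U :\ x) F v = \sum_(v in U) (if v != x then F v else 0).
Proof.
rewrite big_mkcond [RHS]big_mkcond; apply: eq_bigr => v _.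
by rewrite !inE; case: (v == x); case: (v \in U).
Qed.

Lemma GA_ident (V : finType) (A : V -> {set V}) (U : {set V}) :
  (forall v, v \notin A v) ->
  \sum_(x in U) (GA A (U :\ x) + (#|A x :&: U| == 0%N)%:R) = #|U|%:R * GA A U.
Proof.
move=> hA.
rewrite big_split /= /GA.
under eq_bigr => x _ do rewrite sum_setD1.
rewrite exchange_big /= -big_split mulr_sumr /=.
apply: eq_bigr => v vU.
rewrite (bigD1 v) //= eqxx add0r.
under eq_bigr => x /andP[_ xv] do rewrite eq_sym xv.
rewrite (bigID (fun x => x \in A v)) /=.
set d := #|A v :&: U|.
rewrite [X in X + _ + _](eq_bigl (fun x => x \in A v :&: U)); last first.
  move=> x; rewrite !inE; case: (x =P v) => [->|_]; last by rewrite andbT andbC.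
  by rewrite (negbTE (hA v)) andbF.
rewrite [X in _ + X + _](eq_bigl (fun x => x \in (U :\: A v) :\ v)); last first.
  by move=> x; rewrite !inE; case: (x == v); case: (x \in U); case: (x \in A v).
rewrite [X in X + _ + _](eq_bigr (fun _ => gg d.-1)); last first.
  move=> x xAU; rewrite /d setIDA (cardsD1 x (A v :&: U)) xAU.
  by rewrite add1n.
rewrite [X in _ + X + _](eq_bigr (fun _ => gg d)); last first.
  move=> x; rewrite !inE => /andP[_ /andP[xA _]].
  congr gg; rewrite /d; apply: eq_card => y; rewrite !inE.
  by case: (y =P x) => [->|]; rewrite ?(negbTE xA) ?andbF.
rewrite !sumr_const.
have hc : #|U| = (d + #|(U :\: A v) :\ v|).+1.
  rewrite -(cardsID (A v) U) (cardsD1 v (U :\: A v)) !inE vU (negbTE (hA v)).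
  by rewrite /d setIC; lia.
by rewrite hc -g_ident.
Qed.

Lemma avg (V : finType) (U : {set V}) (a : V -> rat) (b : rat) :
  U != set0 -> \sum_(x in U) a x = #|U|%:R * b -> exists2 x, x \in U & b <= a x.
Proof.
move=> /set0Pn [x0 hx0] hs.
case: (boolP [exists x in U, b <= a x]) => [/exists_inP[x ? ?]|/exists_inPn H].
  by exists x.
have : \sum_(x in U) a x < \sum_(x in U) b.
  apply: ltr_sum; first by apply/hasP; exists x0; rewrite ?mem_index_enum.
  by move=> x xU; rewrite ltNge H.
by rewrite hs sumr_const mulr_natl ltxx.
Qed.

Lemma acyc_add (V : finType) (e : rel V) (U S : {set V}) x :
  S \subset U -> acyclic_set e S -> x \in U ->
  (outN e x :&: U == set0) || (inN e x :&: U == set0) -> acyclic_set e (x |: S).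
Proof.
move=> SU aS xU hx; apply/negP => /existsP [n /existsP [c /and4P [n0 uc allc cyc]]].
have cU : forall y, y \in c -> y \in U.
  move=> y yc; move/allP: allc => /(_ y yc); rewrite !inE => /orP[/eqP->//|].
  by move/(subsetP SU).
case: (boolP (x \in c)) => xc.
  case/orP: hx => /eqP/setP hx.
    move: (hx (next c x)); rewrite !inE (next_cycle cyc xc) cU //.
    by rewrite mem_next.
  move: (hx (prev c x)); rewrite !inE (prev_cycle cyc xc) cU //.
  by rewrite mem_prev.
move/negP: aS; apply; apply/existsP; exists n; apply/existsP; exists c.
rewrite n0 uc cyc andbT /=; apply/allP => y yc.
move/allP: allc => /(_ y yc); rewrite !inE => /orP[/eqP yx|//].
by move: xc; rewrite -yx yc.
Qed.

Definition unN (V : finType) (e : rel V) (v : V) := outN e v :|: inN e v.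

Definition FF (V : finType) (e : rel V) (U : {set V}) : rat :=
  GA (outN e) U + GA (inN e) U - GA (unN e) U.

Definition ind (V : finType) (e : rel V) (U : {set V}) x : rat :=
  (#|outN e x :&: U| == 0%N)%:R + (#|inN e x :&: U| == 0%N)%:R
  - (#|unN e x :&: U| == 0%N)%:R.

Lemma FF_ident (V : finType) (e : rel V) (Hloop : irreflexive e) (U : {set V}) :
  \sum_(x in U) (FF e (U :\ x) + ind e U x) = #|U|%:R * FF e U.
Proof.
have E : forall x, FF e (U :\ x) + ind e U x =
  (GA (outN e) (U :\ x) + (#|outN e x :&: U| == 0%N)%:R)
  + (GA (inN e) (U :\ x) + (#|inN e x :&: U| == 0%N)%:R)
  - (GA (unN e) (U :\ x) + (#|unN e x :&: U| == 0%N)%:R).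
  by move=> x; rewrite /FF /ind; ring.
rewrite (eq_bigr _ (fun x _ => E x)) sumrB big_split /= !GA_ident /FF.
- by ring.
- by move=> v; rewrite !inE Hloop.
- by move=> v; rewrite !inE Hloop.
- by move=> v; rewrite !inE Hloop.
Qed.

Lemma ind_val (V : finType) (e : rel V) (U : {set V}) x :
  ind e U x = ((outN e x :&: U == set0) || (inN e x :&: U == set0))%:R.
Proof.
rewrite /ind /unN setIUl !cards_eq0 setU_eq0.
by case: (_ == set0); case: (_ == set0); rewrite /= ?addr0 ?subrr ?add0r ?subr0.
Qed.

Lemma main_ind (V : finType) (e : rel V) (Hloop : irreflexive e) n :
  forall U : {set V}, #|U| = n ->
  exists2 S : {set V}, S \subset U & acyclic_set e S && (FF e U <= #|S|%:R).
Proof.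
elim: n => [|n IH] U hU.
  have -> : U = set0 by apply/eqP; rewrite -cards_eq0 hU.
  exists set0 => //; apply/andP; split.
    apply/negP => /existsP [k /existsP [c /and4P [n0 uc allc cyc]]].
    clear uc cyc; move: n0 allc; case: c => [[|y c] hc] /=.
      by rewrite -(eqP hc).
    by move=> _ /andP[]; rewrite inE.
  by rewrite /FF /GA !big1 ?cards0 ?subrr // => i; rewrite inE.
have U0 : U != set0 by rewrite -card_gt0 hU.
have [x xU hx] := avg U0 (FF_ident Hloop U).
have hUx : #|U :\ x| = n by move: hU; rewrite (cardsD1 x U) xU; case.
have [S SU /andP [aS hS]] := IH (U :\ x) hUx.
move: hx; rewrite ind_val.
case: (boolP ((outN e x :&: U == set0) || (inN e x :&: U == set0))) => hb /= hx.
  exists (x |: S).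
    by apply/subsetP => y; rewrite !inE => /orP [/eqP->//|/(subsetP SU)]; rewrite inE => /andP[].
  rewrite (acyc_add (U := U)) //=; last by apply: subset_trans SU (subsetDl _ _).
  have xS : x \notin S by apply/negP => /(subsetP SU); rewrite !inE eqxx.
  rewrite cardsU1 xS /= natrD.
  by apply: le_trans hx _; rewrite addrC lerD2l.
exists S; first by apply: subset_trans SU (subsetDl _ _).
by rewrite aS /=; apply: le_trans hx _; rewrite addr0.
Qed.

Theorem mainTheorem1 (V : finType) (e : rel V) (Hloop : irreflexive e) :
  (alpha e)%:R >=
  \sum_(v : V) ((1 + #|outN e v|%:R)^-1 + (1 + #|inN e v|%:R)^-1
                - (1 + #|outN e v :|: inN e v|%:R)^-1 : rat).
Proof.
have [S _ /andP [aS hS]] := main_ind Hloop (erefl #|[set: V]|).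
apply: le_trans (_ : #|S|%:R <= _); last first.
  by rewrite ler_nat /alpha; apply: leq_bigmax_cond.
apply: le_trans hS; rewrite /FF /GA -big_split -sumrB /=.
rewrite (eq_bigl (fun v => v \in [set: V])); last by move=> v; rewrite in_setT.
apply: ler_sum => v _.
by rewrite !setIT /gg /unN.
Qed.
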